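(* Suppose $\mathcal Q$ is vertically unbounded. Let $0\le k<\ell\le D$, let $\alpha\in\mathcal B_\ell$ be sharp and let $\beta\in\mathcal B_k$. Put $\lambda=(\beta-\alpha)/(\ell-k)\in\Gamma$ (so $-\lambda$ is the slope of the segment joining $(\ell,\alpha)$ and $(k,\beta)$). Then there exists $R\in\mathcal Q$ with $\gamma_R>\lambda$.
   Context: Let $(K,v)$ be a valued field, $\Gamma$ the divisible hull of $vK$, embedded in a divisible ordered abelian group $\Lambda$. Let $\nu\colon K[x]\to\Lambda\cup\{\infty\}$ be a valuation extending $v$ which is well-specified, i.e. it is not the case that simultaneously $\nu^{-1}(\infty)=0$, the value group of $\nu$ modulo $\Gamma$ is torsion, and the residue field of $\nu$ is algebraic over that of $v$. For $s\ge0$ let $\partial_s$ be the $s$-th Hasse–Schmidt derivative, defined by $f(x+y)=\sum_{s\ge0}(\partial_sf)y^s$. For nonconstant $f$ with $\nu(f)<\infty$ the level is $\epsilon_\nu(f)=\max\{(\nu(f)-\nu(\partial_sf))/s: s\ge1\}$; $\epsilon_\nu(a)=-\infty$ for $a\in K$. A monic $Q\in K[x]$ is a key polynomial for $\nu$ if $\epsilon_\nu(f)<\epsilon_\nu(Q)$ whenever $\deg f<\deg Q$. For monic $Q$, each $f$ has a unique $Q$-expansion $f=\sum_{i\ge0}f_{Q,i}Q^i$ with $\deg f_{Q,i}<\deg Q$; set $\nu_Q(f)=\min_i\nu(f_{Q,i}Q^i)$. Fix $m\ge1$ such that the set $\Psi_m$ of key polynomials of degree $m$ for $\nu$ is nonempty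 and has no element of maximal $\nu$-value. Let $\mathcal Q\subseteq\Psi_m$ be well-ordered by $Q<R\iff\nu(Q)<\nu(R)$ and cofinal in $\Psi_m$ for $\nu$-values; write $\gamma_Q=\nu(Q)$. As in the paper, all values $\nu_Q(f)$ ($f\ne0$) lie in $\Gamma$. $f$ is $\mathcal Q$-stable if $\nu_Q(f)=\nu(f)$ for all $Q$ in a final segment of $\mathcal Q$, $\mathcal Q$-unstable otherwise. Assume unstable polynomials exist; limit key polynomials are the monic $\mathcal Q$-unstable polynomials of minimal degree, forming $\mathrm{KP}_\infty(\mathcal Q)$. Fix $F\in\mathrm{KP}_\infty(\mathcal Q)$ and $D=\lfloor\deg F/m\rfloor$. Let $\delta^L$ be the smallest initial segment of $\Gamma$ containing $\{\nu_Q(F):Q\in\mathcal Q\}$. A cut $\eta=(\eta^L,\eta^R)$ of $\Gamma$ is vertically bounded if for every $x\in\eta^L$ and rational $q>1$ there is $y\in\eta^L$ with $q(y-x)>z-x$ for all $z\in\eta^L$; its invariance group is $\{h\in\Gamma:h+\eta^L=\eta^L\}$. Let $\gamma_{\mathcal Q}$ be the cut whose lower set is the smallest initial segment containing $\{\gamma_Q\}$; $\mathcal Q$ is vertically unbounded if $\gamma_{\mathcal Q}$ is not vertically bounded; $H$ denotes the invariance group of $\gamma_{\mathcal Q}$. For $\ell\in\{0,\dots,D\}$, $\mathcal B_\ell$ is the smallest initial segment of $\Gamma$ containing all $\beta\in\Gamma$ such that $\beta+\ell\gamma_Q\in\delta^L$ for some $Q\in\mathcal Q$. An element $\alpha\in\mathcal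 B_\ell$ is sharp if $\alpha+H$ is a final segment of $\mathcal B_\ell$, i.e. $\alpha+H\subseteq\mathcal B_\ell$ and every element of $\mathcal B_\ell$ is smaller than $\alpha+h$ for some $h\in H$. *)

(* Defs.v *)
From HB Require Import structures.
From mathcomp Require Import all_boot all_order all_algebra.
Set Implicit Arguments. Unset Strict Implicit. Unset Printing Implicit Defensive.
Import GRing.Theory Num.Theory.
Local Open Scope ring_scope.

(* The divisible ordered abelian group Lambda is modelled as a Q-vector space
   [L : lmodType rat] (a divisible torsion-free abelian group is uniquely a
   Q-vector space) together with a total order [le] compatible with addition.
   [None : option L] plays the role of infinity (for values) or of -infinity
   (for levels). *)

Definition ordered_group (L : lmodType rat) (le : rel L) : Prop :=
  [/\ reflexive le, antisymmetric le, transitive le, total le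
    & forall x y z, le x y -> le (x + z) (y + z)].

Definition ltL (L : lmodType rat) (le : rel L) (x y : L) : bool :=
  (x != y) && le x y.

Definition leo (L : lmodType rat) (le : rel L) (x y : option L) : bool :=
  match x, y with
  | _, None => true
  | None, Some _ => false
  | Some a, Some b => le a b
  end.
Definition lto (L : lmodType rat) (le : rel L) (x y : option L) : bool :=
  (x != y) && leo le x y.
Definition addo (L : lmodType rat) (x y : option L) : option L :=
  match x, y with Some a, Some b => Some (a + b) | _, _ => None end.
Definition mino (L : lmodType rat) (le : rel L) (x y : option L) : option L :=
  if leo le x y then x else y.

Definition is_valuation (R : comNzRingType) (L : lmodType rat) (le : rel L)
    (w : R -> option L) : Prop :=
  [/\ w 0 = None, w 1 = Some 0,
      (forall x y, w (x * y) = addo (w x) (w y))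
    & (forall x y, leo le (w x) (w (x + y)) || leo le (w y) (w (x + y)))].

Definition Gam (K : fieldType) (L : lmodType rat) (v : K -> option L) (x : L) : Prop :=
  exists n : nat, (0 < n)%N /\ exists a : K, v a = Some (x *+ n).

Definition trivial_support (K : fieldType) (L : lmodType rat)
    (nu : {poly K} -> option L) : Prop :=
  forall f, nu f = None -> f = 0.

Definition value_group_torsion (K : fieldType) (L : lmodType rat)
    (v : K -> option L) (nu : {poly K} -> option L) : Prop :=
  forall f a, nu f = Some a -> exists n : nat, (0 < n)%N /\ Gam v (a *+ n).

(* The residue field of nu is algebraic over that of v: every element of the
   residue field of nu, i.e. the class of f/g with nu g finite and
   nu f >= nu g, is a root of a nonzero polynomial with coefficients in the
   residue field of v. *)
Definition residue_algebraic (K : fieldType) (L : lmodType rat) (le : rel L)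
    (v : K -> option L) (nu : {poly K} -> option L) : Prop :=
  forall f g a, nu g = Some a -> leo le (Some a) (nu f) ->
    exists (n : nat) (c : nat -> K),
      [/\ forall i, (i <= n)%N -> leo le (Some 0) (v (c i)),
          exists2 i, (i <= n)%N & v (c i) = Some 0
        & lto le (Some (a *+ n))
             (nu (\sum_(i < n.+1) (c i)%:P * f ^+ i * g ^+ (n - i)))].

Definition well_specified (K : fieldType) (L : lmodType rat) (le : rel L)
    (v : K -> option L) (nu : {poly K} -> option L) : Prop :=
  ~ [/\ trivial_support nu, value_group_torsion v nu & residue_algebraic le v nu].

Definition maxm (L : lmodType rat) (le : rel L) (x y : option L) : option L :=
  match x, y with
  | None, _ => y
  | _, None => x
  | Some a, Some b => if le a b then Some b else Some a
  end.
Definition ltm (L : lmodType rat) (le : rel L) (x y : option L) : bool :=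
  match x, y with
  | _, None => false
  | None, Some _ => true
  | Some a, Some b => ltL le a b
  end.

(* level eps_nu(f) = max_{s>=1} (nu f - nu (d_s f)) / s, d_s the Hasse-Schmidt
   derivative (f^`N(s)); terms with nu(d_s f) = infinity (in particular all
   s > deg f) contribute -infinity.  Meaningful for nonconstant f with
   nu f < infinity; for constants it is None = -infinity. *)
Definition level (K : fieldType) (L : lmodType rat) (le : rel L)
    (nu : {poly K} -> option L) (f : {poly K}) : option L :=
  match nu f with
  | Some a => \big[maxm le/None]_(1 <= s < size f)
                 omap (fun b => (s%:R : rat)^-1 *: (a - b)) (nu (f^`N(s)))
  | None => None
  end.

Definition key_poly (K : fieldType) (L : lmodType rat) (le : rel L)
    (nu : {poly K} -> option L) (Q : {poly K}) : Prop :=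
  [/\ Q \is monic, (1 < size Q)%N, nu Q <> None
    & forall f : {poly K}, (size f < size Q)%N ->
        ((size f <= 1)%N \/ nu f <> None) ->
        ltm le (level le nu f) (level le nu Q)].

Definition qexp_coef (K : fieldType) (Q f : {poly K}) (i : nat) : {poly K} :=
  (f %/ Q ^+ i) %% Q.

Definition nuQ (K : fieldType) (L : lmodType rat) (le : rel L)
    (nu : {poly K} -> option L) (Q f : {poly K}) : option L :=
  \big[mino le/None]_(i < size f) nu (qexp_coef Q f i * Q ^+ i).

Definition good_family (K : fieldType) (L : lmodType rat) (le : rel L)
    (nu : {poly K} -> option L) (m : nat) (QQ : {poly K} -> Prop) : Prop :=
  [/\ forall Q, QQ Q -> key_poly le nu Q /\ size Q = m.+1,
      forall Q R, QQ Q -> QQ R -> nu Q = nu R -> Q = R,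
      forall S : {poly K} -> Prop, (forall Q, S Q -> QQ Q) -> (exists Q, S Q) ->
        exists Q0, S Q0 /\ forall Q, S Q -> leo le (nu Q0) (nu Q)
    & forall P, key_poly le nu P -> size P = m.+1 ->
        exists2 Q, QQ Q & leo le (nu P) (nu Q)].

Definition stable (K : fieldType) (L : lmodType rat) (le : rel L)
    (nu : {poly K} -> option L) (QQ : {poly K} -> Prop) (f : {poly K}) : Prop :=
  exists Q0, QQ Q0 /\ forall Q, QQ Q -> leo le (nu Q0) (nu Q) -> nuQ le nu Q f = nu f.

Definition limit_key_poly (K : fieldType) (L : lmodType rat) (le : rel L)
    (nu : {poly K} -> option L) (QQ : {poly K} -> Prop) (F : {poly K}) : Prop :=
  [/\ F \is monic, ~ stable le nu QQ F
    & forall f, ~ stable le nu QQ f -> (size F <= size f)%N].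

Definition vertically_bounded (L : lmodType rat) (le : rel L) (etaL : L -> Prop) : Prop :=
  forall x, etaL x -> forall q : rat, 1 < q ->
    exists y, etaL y /\ forall z, etaL z -> ltL le (z - x) (q *: (y - x)).

Definition invariance_group (K : fieldType) (L : lmodType rat)
    (v : K -> option L) (etaL : L -> Prop) (h : L) : Prop :=
  Gam v h /\ forall z, etaL (z - h) <-> etaL z.

(* lower set of gamma_QQ *)
Definition gammaQQ_L (K : fieldType) (L : lmodType rat) (le : rel L)
    (v : K -> option L) (nu : {poly K} -> option L) (QQ : {poly K} -> Prop) (x : L) : Prop :=
  Gam v x /\ exists Q g, [/\ QQ Q, nu Q = Some g & le x g].

Definition vertically_unbounded (K : fieldType) (L : lmodType rat) (le : rel L)
    (v : K -> option L) (nu : {poly K} -> option L) (QQ : {poly K} -> Prop) : Prop :=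
  ~ vertically_bounded le (gammaQQ_L le v nu QQ).

Definition H_QQ (K : fieldType) (L : lmodType rat) (le : rel L)
    (v : K -> option L) (nu : {poly K} -> option L) (QQ : {poly K} -> Prop) : L -> Prop :=
  invariance_group v (gammaQQ_L le v nu QQ).

Definition deltaL (K : fieldType) (L : lmodType rat) (le : rel L)
    (v : K -> option L) (nu : {poly K} -> option L) (QQ : {poly K} -> Prop)
    (F : {poly K}) (x : L) : Prop :=
  Gam v x /\ exists Q y, [/\ QQ Q, nuQ le nu Q F = Some y & le x y].

Definition Bset (K : fieldType) (L : lmodType rat) (le : rel L)
    (v : K -> option L) (nu : {poly K} -> option L) (QQ : {poly K} -> Prop)
    (F : {poly K}) (l : nat) (x : L) : Prop :=
  Gam v x /\ exists b Q g,
    [/\ Gam v b, QQ Q, nu Q = Some g, deltaL le v nu QQ F (b + g *+ l) & le x b].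

Definition sharp (K : fieldType) (L : lmodType rat) (le : rel L)
    (v : K -> option L) (nu : {poly K} -> option L) (QQ : {poly K} -> Prop)
    (F : {poly K}) (l : nat) (a : L) : Prop :=
  [/\ Bset le v nu QQ F l a,
      forall h, H_QQ le v nu QQ h -> Bset le v nu QQ F l (a + h)
    & forall b, Bset le v nu QQ F l b ->
        exists h, H_QQ le v nu QQ h /\ ltL le b (a + h)].

(* Main.v *)
Require Import Defs.
From HB Require Import structures.
From mathcomp Require Import all_boot all_order all_algebra.
Import GRing.Theory Num.Theory.
Local Open Scope ring_scope.
Set Implicit Arguments. Unset Strict Implicit.

Section OG.
Variables (L : lmodType rat) (le : rel L) (hle : ordered_group le).

Lemma le_cone x y : le x y = le 0 (y - x).
Proof.
case: hle => hre han htr hto hadd.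
apply/idP/idP => H.
  by have := hadd _ _ (- x) H; rewrite subrr.
by have := hadd _ _ x H; rewrite add0r subrK.
Qed.

Lemma lt_cone x y : ltL le x y = ((y - x) != 0) && le 0 (y - x).
Proof. by rewrite /ltL -le_cone subr_eq0 eq_sym. Qed.

Lemma cone_add a b : le 0 a -> le 0 b -> le 0 (a + b).
Proof.
case: hle => hre han htr hto hadd => Ha Hb.
have := hadd _ _ b Ha; rewrite add0r => H.
exact: htr Hb H.
Qed.

Lemma cone_anti a : le 0 a -> le 0 (- a) -> a = 0.
Proof.
case: hle => hre han htr hto hadd => Ha Hb.
have H2 : le a 0 by rewrite le_cone sub0r.
by apply: han; rewrite H2 Ha.
Qed.

Lemma cone_tot a : le 0 a \/ le 0 (- a).
Proof.
case: hle => hre han htr hto hadd.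
by case/orP: (hto 0 a) => H; [left|right; rewrite le_cone sub0r in H].
Qed.

Lemma cone_muln a n : le 0 a -> le 0 (a *+ n).
Proof.
case: hle => hre han htr hto hadd => Ha.
elim: n => [|n IH]; first by rewrite mulr0n.
by rewrite mulrS; apply: cone_add.
Qed.

Lemma muln_eq0 (a : L) n : (0 < n)%N -> a *+ n = 0 -> a = 0.
Proof.
move=> hn H.
have : (n%:R^-1 : rat) *: (a *+ n) = a.
  by rewrite -scaler_nat scalerA mulVf ?scale1r // pnatr_eq0 -lt0n.
by rewrite H scaler0.
Qed.

Lemma cone_muln_inv a n : (0 < n)%N -> le 0 (a *+ n) -> le 0 a.
Proof.
move=> hn H; case: (cone_tot a) => // Hn.
have H2 := cone_muln n Hn; rewrite mulNrn in H2.
have := cone_anti H H2 => /(muln_eq0 hn) ->.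
by case: hle.
Qed.

Lemma scaleK n (x : L) : (0 < n)%N -> (n%:R^-1 : rat) *: (x *+ n) = x.
Proof. by move=> hn; rewrite -scaler_nat scalerA mulVf ?scale1r // pnatr_eq0 -lt0n. Qed.

Lemma scaleK' n (x : L) : (0 < n)%N -> ((n%:R^-1 : rat) *: x) *+ n = x.
Proof. by move=> hn; rewrite -scaler_nat scalerA mulfV ?scale1r // pnatr_eq0 -lt0n. Qed.

End OG.
Section GamS.
Variables (K : fieldType) (L : lmodType rat) (le : rel L) (v : K -> option L).
Hypothesis hv : is_valuation le v.

Lemma v_pow a s j : v a = Some s -> v (a ^+ j) = Some (s *+ j).
Proof.
case: hv => v0 v1 vm _ H.
elim: j => [|j IH]; first by rewrite expr0 mulr0n.
by rewrite exprS vm H IH /= mulrS.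
Qed.

Lemma Gam_add x y : Gam v x -> Gam v y -> Gam v (x + y).
Proof.
case: hv => v0 v1 vm _.
move=> [n [hn [a Ha]]] [m [hm [b Hb]]].
exists (n * m)%N; split; first by rewrite muln_gt0 hn.
exists (a ^+ m * b ^+ n); rewrite vm (v_pow m Ha) (v_pow n Hb) /=.
by rewrite mulrnDl -!mulrnA mulnC.
Qed.

Lemma Gam_opp x : Gam v x -> Gam v (- x).
Proof.
case: hv => v0 v1 vm _.
move=> [n [hn [a Ha]]]; exists n; split => //.
have a0 : a != 0 by apply/eqP => a0; rewrite a0 v0 in Ha.
exists a^-1.
have := vm a a^-1; rewrite mulfV // v1 Ha.
case: (v a^-1) => //= y [] H; congr Some.
by rewrite mulNrn; apply/eqP; rewrite -addr_eq0 addrC H.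
Qed.

Lemma Gam_sub x y : Gam v x -> Gam v y -> Gam v (x - y).
Proof. by move=> Hx Hy; apply: Gam_add => //; apply: Gam_opp. Qed.

Lemma Gam_divn x k : (0 < k)%N -> Gam v (x *+ k) -> Gam v x.
Proof.
move=> hk [n [hn [a Ha]]]; exists (k * n)%N; split; first by rewrite muln_gt0 hk.
by exists a; rewrite Ha mulrnA.
Qed.

End GamS.

Section OG2.
Variables (L : lmodType rat) (le : rel L) (hle : ordered_group le).

Lemma lt_le_trans x y z : ltL le x y -> le y z -> ltL le x z.
Proof.
case: hle => hre han htr hto hadd.
move=> /andP [nxy lxy] lyz; apply/andP; split; last exact: htr lxy lyz.
apply/eqP => exz; move: lyz; rewrite -exz => lyx.
by move/eqP: nxy; apply; apply: han; rewrite lxy lyx.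
Qed.

Lemma le_lt_trans x y z : le x y -> ltL le y z -> ltL le x z.
Proof.
case: hle => hre han htr hto hadd.
move=> lxy /andP [nyz lyz]; apply/andP; split; last exact: htr lxy lyz.
apply/eqP => exz; move: lxy; rewrite exz => lzy.
by move/eqP: nyz; apply; apply: han; rewrite lyz lzy.
Qed.

Lemma lt_add x y z : ltL le x y -> ltL le (x + z) (y + z).
Proof.
case: hle => hre han htr hto hadd.
move=> /andP [nxy lxy]; apply/andP; split; last exact: hadd.
by apply: contra nxy => /eqP /addIr ->.
Qed.

Lemma spos_muln_inv a n : (0 < n)%N -> ltL le 0 (a *+ n) -> ltL le 0 a.
Proof.
move=> hn; rewrite !(lt_cone hle) !subr0 => /andP [nz H].
apply/andP; split; last exact: cone_muln_inv H.
by apply: contra nz => /eqP ->; rewrite mul0rn.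
Qed.

Lemma lt_scale n x y : (0 < n)%N -> ltL le x y ->
  ltL le ((n%:R^-1 : rat) *: x) ((n%:R^-1 : rat) *: y).
Proof.
move=> hn H; rewrite (lt_cone hle) -scalerBr -(subr0 (_ *: _)) -(lt_cone hle).
apply: (spos_muln_inv hn); rewrite scaleK' //.
by rewrite (lt_cone hle) subr0 -(lt_cone hle).
Qed.

End OG2.

Lemma Gam_muln (K : fieldType) (L : lmodType rat) (le : rel L) (v : K -> option L)
  (hv : is_valuation le v) x j : Gam v x -> Gam v (x *+ j).
Proof.
move=> Hx; elim: j => [|j IH].
  case: hv => v0 v1 _ _; exists 1%N; split => //; exists 1; by rewrite v1 mulr0n.
by rewrite mulrS; apply: (Gam_add hv).
Qed.

Theorem mainTheorem12
  (K : fieldType) (L : lmodType rat) (le : rel L) (hle : ordered_group le)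
  (v : K -> option L) (hv : is_valuation le v)
  (nu : {poly K} -> option L) (hnu : is_valuation le nu)
  (hext : forall c : K, nu c%:P = v c)
  (hws : well_specified le v nu)
  (m : nat) (hm : (0 < m)%N)
  (hPsi : exists P, key_poly le nu P /\ size P = m.+1)
  (hnomax : forall P, key_poly le nu P -> size P = m.+1 ->
     exists P', [/\ key_poly le nu P', size P' = m.+1 & lto le (nu P) (nu P')])
  (QQ : {poly K} -> Prop) (hQQ : good_family le nu m QQ)
  (hunst : exists f, ~ stable le nu QQ f)
  (F : {poly K}) (hF : limit_key_poly le nu QQ F)
  (hvu : vertically_unbounded le v nu QQ)
  (k l : nat) (hkl : (k < l)%N) (hlD : (l <= (size F).-1 %/ m)%N)
  (alpha : L) (halpha : sharp le v nu QQ F l alpha)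
  (beta : L) (hbeta : Bset le v nu QQ F k beta) :
  exists R g, [/\ QQ R, nu R = Some g
    & ltL le (((l - k)%N%:R : rat)^-1 *: (beta - alpha)) g].
Proof.
have hle' := hle; case: hle' => hre han htr hto hadd.
set n := (l - k)%N.
have hn : (0 < n)%N by rewrite subn_gt0.
have hln : l = (k + n)%N by rewrite subnKC // ltnW.
case: hbeta => _ [b [Q [g [Gb QQQ nuQ dl lebb]]]].
case: halpha => [[_ [b0 [R0 [g0 [Gb0 QR0 nuR0 dl0 _]]]]] hsh1 hsh2].
have [gs [Qs [Ggs QQs nus dls]]] : exists gs Qs, [/\ Gam v gs, QQ Qs,
    nu Qs = Some gs & deltaL le v nu QQ F (b + gs *+ k)].
  case: (posnP k) => hk.
  - exists g0, R0; split => //; last by rewrite hk mulr0n; rewrite hk mulr0n in dl.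
    apply: (Gam_divn (k:=l)); first by rewrite -hk.
    by have := Gam_sub hv dl0.1 Gb0; rewrite addrC addKr.
  - exists g, Q; split => //; apply: (Gam_divn hk).
    by have := Gam_sub hv dl.1 Gb; rewrite addrC addKr.
set b' := b + gs *+ k - gs *+ l.
have hb' : b' = b - gs *+ n by rewrite /b' hln mulrnDr opprD addrA addrK.
have Bb' : Bset le v nu QQ F l b'.
  have Gb' : Gam v b' by apply: (Gam_sub hv dls.1); apply: (Gam_muln hv).
  split => //; exists b', Qs, gs; split => //; by rewrite /b' subrK.
case: (hsh2 _ Bb') => h [[Gh hinv] hlt].
have [h0 [h0p hh0 [R [gR [QR nuR hgR]]]]] : exists h0, [/\ le 0 h0, le h h0 &
   exists R gR, [/\ QQ R, nu R = Some gR & le (gs + h0) gR]].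
  case/orP: (hto 0 h) => H.
  - exists h; split => //.
    have : gammaQQ_L le v nu QQ (gs + h).
      by apply/hinv; rewrite addrK; split => //; exists Qs, gs; split.
    by case=> _ [R [gR [? ? ?]]]; exists R, gR.
  - by exists 0; split => //; exists Qs, gs; split => //; rewrite addr0.
exists R, gR; split => //.

have s1 : ltL le (beta - alpha) (gs *+ n + h0).
  apply: (le_lt_trans hle (y := b - alpha)); first exact: hadd.
  have := lt_add hle (gs *+ n - alpha) hlt.
  rewrite hb' addrA subrK => H.
  apply: (lt_le_trans hle H).
  rewrite addrC addrA subrK [gs *+ n + h]addrC [gs *+ n + h0]addrC.
  exact: hadd.
have s2 := lt_scale hle hn s1.
rewrite [X in ltL _ _ X]scalerDr scaleK // in s2.
set X := (_ *: h0) in s2.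
have hX : h0 = X *+ n by rewrite /X scaleK'.
have Xp : le 0 X by apply: (cone_muln_inv hle hn); rewrite -hX.
have XL : le X h0.
  rewrite (le_cone hle) {1}hX.
  have -> : n = (n.-1).+1 by rewrite prednK.
  by rewrite mulrSr addrK; apply: cone_muln.
apply: (lt_le_trans hle s2); apply: (htr _ _ _ _ hgR).
by rewrite addrC [gs + h0]addrC; apply: hadd.
Qed.
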